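(* Let $F$ be a graph of diameter $2$, $n=|V(F)|$, $t=\delta(F)$, and let $l>n$ be an integer. For every subgraph $Y$ of $F_{2l}$ that is isomorphic to $F$ and contains the vertex $2l$: (1) the edges $(1,2l),(2,2l),\dots,(t,2l)$ all belong to $Y$; (2) $Y$ is a subgraph of $X$.
   Context: All graphs are simple, finite, undirected; $\delta(F)$ is the minimum degree of $F$. $A_{2l-1}$ is the graph with vertex set $\{1,\dots,2l-1\}$ in which distinct $i,j$ are adjacent iff $|i-j|\le l-1$. $F_{2l}$ is obtained from $A_{2l-1}$ by adding a new vertex $2l$ joined exactly to $1,2,\dots,t$. $X$ is the subgraph of $F_{2l}$ induced by the vertex set $\{1,2,\dots,l+t-1\}\cup\{2l\}$. *)

(* Defs.v *)
From mathcomp Require Import all_boot.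
Set Implicit Arguments. Unset Strict Implicit. Unset Printing Implicit Defensive.

(* A simple graph F is a symmetric irreflexive relation e on a finType V. *)

Definition diam2 (V : finType) (e : rel V) : Prop :=
  (forall x y, x != y -> e x y \/ exists z, e x z /\ e z y) /\
  (exists x y, x != y /\ ~~ e x y).

Definition deg (V : finType) (e : rel V) (x : V) : nat := #|[set y | e x y]|.
Definition mindeg (V : finType) (e : rel V) : nat :=
  \big[minn/#|V|]_(x : V) deg e x.

Definition A_vert (l : nat) (i : nat) : bool := 1 <= i <= 2 * l - 1.
Definition A_adj (l : nat) (i j : nat) : bool :=
  [&& i != j, A_vert l i, A_vert l j & (i - j <= l - 1) && (j - i <= l - 1)].

Definition F2l_vert (l : nat) (i : nat) : bool := 1 <= i <= 2 * l.
Definition F2l_adj (l t : nat) (i j : nat) : bool :=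
  [|| A_adj l i j, (i == 2 * l) && (1 <= j <= t) | (j == 2 * l) && (1 <= i <= t)].

Definition X_vert (l t : nat) (i : nat) : bool := (1 <= i <= l + t - 1) || (i == 2 * l).
Definition X_adj (l t : nat) (i j : nat) : bool :=
  [&& X_vert l t i, X_vert l t j & F2l_adj l t i j].

Definition is_subgraph (N : nat) (P : pred nat) (adj : rel nat)
  (VY : {set 'I_N}) (EY : rel 'I_N) : Prop :=
  (forall v, v \in VY -> P v) /\
  (forall u v, EY u v -> [/\ u \in VY, v \in VY & adj u v]).

Definition iso_to (V : finType) (e : rel V) (N : nat)
  (VY : {set 'I_N}) (EY : rel 'I_N) : Prop :=
  exists f : V -> 'I_N,
    [/\ injective f, f @: [set: V] = VY & forall x y, e x y = EY (f x) (f y)].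

(* Main.v *)
Require Import Defs.
From mathcomp Require Import all_boot.
From mathcomp Require Import zify.

Lemma bigmin_le_seq (T : eqType) (F : T -> nat) m x (s : seq T) :
  x \in s -> \big[minn/m]_(y <- s) F y <= F x.
Proof.
elim: s => [//|a s IH]; rewrite inE big_cons => /orP [/eqP->|/IH h].
  exact: geq_minl.
exact: leq_trans (geq_minr _ _) h.
Qed.

Lemma mindeg_le (V : finType) (e : rel V) x : mindeg e <= deg e x.
Proof.
rewrite /mindeg; apply: bigmin_le_seq; by rewrite mem_index_enum.
Qed.

Lemma mindeg_card (V : finType) (e : rel V) : mindeg e <= #|V|.
Proof.
rewrite /mindeg; elim/big_rec: _ => // i x _ h; exact: leq_trans (geq_minr _ _) h.
Qed.

Lemma adj_top l t j : t < l -> F2l_adj l t (2*l) j -> 1 <= j <= t.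
Proof.
rewrite /F2l_adj /A_adj /A_vert => ht /or3P
  [/and4P [_ /andP[_ h] _ _] | /andP [_ h] | /andP[/eqP hj /andP[h1 h2]]] //; lia.
Qed.

Lemma adj_low l t i j : t < l -> 1 <= i <= t -> j != 2*l -> F2l_adj l t i j ->
  1 <= j <= l + t - 1.
Proof.
rewrite /F2l_adj /A_adj /A_vert => ht /andP[hi1 hi2] hj /or3P
  [/and4P [_ _ /andP[hj1 hj2] /andP[h1 h2]] | /andP [/eqP hi _] | /andP[/eqP hj' _]].
- lia.
- lia.
- by rewrite hj' eqxx in hj.
Qed.

Lemma card_range N t : t < N.+1 -> #|[set i : 'I_N.+1 | 1 <= i <= t]| <= t.
Proof.
move=> htN.
have -> : [set i : 'I_N.+1 | 1 <= i <= t] = [set inord (nat_of_ord k).+1 | k : 'I_t].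
  apply/setP => i; rewrite inE; apply/idP/imsetP.
    move=> /andP [h1 h2].
    have hk : i.-1 < t by lia.
    exists (Ordinal hk) => //; apply: val_inj => /=.
    rewrite inordK; have := ltn_ord i; lia.
  case=> k _ ->.
  have hk := ltn_ord k; rewrite inordK; lia.
by apply: leq_trans (leq_imset_card _ _) _; rewrite card_ord.
Qed.

Theorem lemma4 (V : finType) (e : rel V)
  (esym : symmetric e) (eirr : irreflexive e) (hdiam : diam2 e)
  (l : nat) (hl : #|V| < l)
  (VY : {set 'I_(2 * l).+1}) (EY : rel 'I_(2 * l).+1)
  (hsub : is_subgraph (F2l_vert l) (F2l_adj l (mindeg e)) VY EY)
  (hiso : iso_to e VY EY)
  (h2l : (ord_max : 'I_(2 * l).+1) \in VY) :
  (forall i : 'I_(2 * l).+1, 1 <= i <= mindeg e -> EY i ord_max) /\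
  is_subgraph (X_vert l (mindeg e)) (X_adj l (mindeg e)) VY EY.
Proof.
set t := mindeg e.
have htl : t < l by have := @mindeg_card V e; rewrite -/t; lia.
case: hiso => f [finj fim fe].
case: hsub => hsv hse.
have : ord_max \in f @: [set: V] by rewrite fim.
case/imsetP => x0 _ hx0.
have nbr : forall y, e x0 y -> 1 <= f y <= t.
  move=> y hy; rewrite fe -hx0 in hy.
  have [_ _ ha] := hse _ _ hy.
  exact: (@adj_top l t (f y) htl ha).
set N := [set y | e x0 y].
set S := [set i : 'I_(2 * l).+1 | 1 <= i <= t].
have sub1 : f @: N \subset S.
  apply/subsetP => i /imsetP [y]; rewrite inE => hy ->.
  by rewrite inE; apply: nbr.
have cS : #|S| <= t by apply: card_range; lia.
have eqS : f @: N = S.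
  apply/eqP; rewrite eqEcard sub1 /=.
  rewrite (card_imset _ finj); apply: leq_trans cS _.
  exact: (@mindeg_le V e).
have part1 : forall i : 'I_(2 * l).+1, 1 <= i <= t -> EY i ord_max.
  move=> i hi.
  have : i \in f @: N by rewrite eqS inE.
  case/imsetP => y; rewrite inE => hy ->.
  by rewrite hx0 -fe esym.
have vert : forall v, v \in VY -> X_vert l t v.
  move=> v; rewrite -fim => /imsetP [y _ ->].
  rewrite /X_vert.
  case: (eqVneq (val (f y)) (2 * l)) => [->|hne]; first by apply/orP; right; apply/eqP.
  have hy : y != x0 by apply: contra hne => /eqP ->; rewrite -hx0.
  case: hdiam => [hd _].
  case: (hd x0 y); first by rewrite eq_sym.
    move=> /nbr h; apply/orP; left; lia.
  case=> z [hz hzy].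
  have h1 := nbr _ hz.
  rewrite fe in hzy; have [_ _ ha] := hse _ _ hzy.
  by rewrite (@adj_low l t (f z) (f y) htl h1 hne ha).
split=> //; split=> //.
move=> u v huv; have [hu hv ha] := hse _ _ huv.
by split=> //; rewrite /X_adj !vert.
Qed.
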